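(* There exist $K_3$-WORM-colorable $K_4$-free graphs $G$ such that $W^-(G,K_3)=3$.
   Context: A $K_3$-WORM coloring of a graph $G$ is an assignment of colors to the vertices of $G$ such that the three vertices of every triangle of $G$ receive exactly two distinct colors. $G$ is $K_3$-WORM-colorable if it has such a coloring, and then $W^-(G,K_3)$ is the minimum number of colors used in a $K_3$-WORM coloring of $G$. A graph is $K_4$-free if it contains no subgraph isomorphic to $K_4$. *)

(* Defs.v *)
From mathcomp Require Import all_boot.
Set Implicit Arguments. Unset Strict Implicit. Unset Printing Implicit Defensive.

Definition simple_graph (T : finType) (e : rel T) : Prop :=
  symmetric e /\ irreflexive e.

Definition triangle (T : finType) (e : rel T) (x y z : T) : Prop :=
  e x y /\ e y z /\ e x z.

Definition K4_free (T : finType) (e : rel T) : Prop :=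
  ~ exists x y z w : T, [&& e x y, e x z, e x w, e y z, e y w & e z w].

Definition num_colors (T : finType) (c : T -> nat) : nat :=
  size (undup [seq c x | x : T]).

Definition K3_WORM (T : finType) (e : rel T) (c : T -> nat) : Prop :=
  forall x y z : T, triangle e x y z -> size (undup [:: c x; c y; c z]) = 2.

Definition K3_WORM_colorable (T : finType) (e : rel T) : Prop :=
  exists c : T -> nat, K3_WORM e c.

Definition W_minus_K3_eq (T : finType) (e : rel T) (k : nat) : Prop :=
  (exists c : T -> nat, K3_WORM e c /\ num_colors c = k) /\
  (forall c : T -> nat, K3_WORM e c -> k <= num_colors c).

(* Main.v *)
Require Import Defs.
From mathcomp Require Import all_boot.
Set Implicit Arguments. Unset Strict Implicit. Unset Printing Implicit Defensive.

Definition N : seq (seq nat) := [:: [:: 1; 6; 9; 11; 14; 16; 17]; [:: 0; 2; 3; 4; 7; 8; 10; 12; 13; 14; 18]; [:: 1; 4; 6; 7; 10; 11; 15; 17; 18; 19]; [:: 1; 4; 5; 6; 9; 17; 18; 19]; [:: 1; 2; 3; 5; 6; 9; 14; 15; 16]; [:: 3; 4; 7; 8; 10; 11; 15; 17; 19]; [:: 0; 2; 3; 4; 12; 16; 17; 19]; [:: 1; 2; 5; 9; 11; 12; 14; 16; 19]; [:: 1; 5; 12; 13; 15; 16; 17; 18]; [:: 0; 3; 4; 7; 10; 12; 13; 15; 18]; [:: 1; 2; 5; 9; 12; 13; 14; 17; 19]; [:: 0; 2; 5; 7; 12; 15; 16; 17]; [:: 1; 6; 7; 8; 9; 10; 11;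 15; 17; 19]; [:: 1; 8; 9; 10; 15; 16; 17]; [:: 0; 1; 4; 7; 10; 15; 17; 18; 19]; [:: 2; 4; 5; 8; 9; 11; 12; 13; 14; 18; 19]; [:: 0; 4; 6; 7; 8; 11; 13; 19]; [:: 0; 2; 3; 5; 6; 8; 10; 11; 12; 13; 14; 18]; [:: 1; 2; 3; 8; 9; 14; 15; 17]; [:: 2; 3; 5; 6; 7; 10; 12; 14; 15; 16]].
Definition cols : seq nat := [:: 2; 1; 2; 0; 1; 0; 1; 1; 0; 0; 1; 1; 0; 0; 2; 1; 2; 1; 1; 1].
Definition trs : seq (nat * nat * nat) := [:: (0, 1, 14); (0, 6, 16); (0, 6, 17); (0, 11, 16); (0, 11, 17); (0, 14, 17); (1, 2, 4); (1, 2, 7); (1, 2, 10); (1, 2, 18); (1, 3, 4); (1, 3, 18); (1, 4, 14); (1, 7, 12); (1, 7, 14); (1, 8, 12); (1, 8, 13); (1, 8, 18); (1, 10, 12); (1, 10, 13); (1, 10, 14); (1, 14, 18); (2, 4, 6); (2, 4, 15); (2, 6, 17); (2, 6, 19); (2, 7, 11); (2, 7, 19); (2, 10, 17); (2, 10, 19); (2, 11, 15); (2, 11, 17); (2, 15, 18); (2, 15, 19); (2, 17, 18); (3, 4, 5); (3, 4, 6); (3, 4, 9); (3, 5, 17); (3, 5, 19); (3, 6, 17); (3, 6, 19); (3, 9, 18); (3, 17, 18); (4, 5, 15); (4, 6, 16); (4, 9, 15); (4, 14, 15); (5, 7, 11); (5, 7, 19); (5, 8, 15); (5, 8, 17); (5,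 10, 17); (5, 10, 19); (5, 11, 15); (5, 11, 17); (5, 15, 19); (6, 12, 17); (6, 12, 19); (6, 16, 19); (7, 9, 12); (7, 11, 12); (7, 11, 16); (7, 12, 19); (7, 14, 19); (7, 16, 19); (8, 12, 15); (8, 12, 17); (8, 13, 15); (8, 13, 16); (8, 13, 17); (8, 15, 18); (8, 17, 18); (9, 10, 12); (9, 10, 13); (9, 12, 15); (9, 13, 15); (9, 15, 18); (10, 12, 17); (10, 12, 19); (10, 13, 17); (10, 14, 17); (10, 14, 19); (11, 12, 15); (11, 12, 17); (12, 15, 19); (14, 15, 18); (14, 15, 19); (14, 17, 18)].

Definition adjn (i j : nat) : bool := j \in nth [::] N i.
Definition E : rel 'I_20 := fun x y => adjn x y.
Definition col (x : 'I_20) : nat := nth 0 cols x.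

Definition mono (s : seq bool) : bool :=
  has (fun t : nat * nat * nat => let: (i, j, k) := t in
         (nth false s i == nth false s j) && (nth false s j == nth false s k)) trs.

Definition monoP (f : nat) (s : seq bool) : bool :=
  has (fun t : nat * nat * nat => let: (i, j, k) := t in
     [&& f <= i, f <= j, f <= k &
         (nth false (nseq f false ++ s) i == nth false (nseq f false ++ s) j) &&
         (nth false (nseq f false ++ s) j == nth false (nseq f false ++ s) k)]) trs.

Lemma monoPP f s L : size L = f -> monoP f s -> mono (L ++ s).
Proof.
move=> HL /hasP[[[i j] k] Ht /and4P[Hi Hj Hk Hm]]; apply/hasP; exists (i, j, k) => //.
by move: Hm; rewrite !nth_cat size_nseq HL !ltnNge Hi Hj Hk.
Qed.

Fixpoint ext (fuel : nat) (s : seq bool) : bool :=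
  if monoP fuel s then true else
  if fuel is f.+1 then (if ext f (true :: s) then ext f (false :: s) else false) else false.

Lemma extP fuel s : ext fuel s -> forall L, size L = fuel -> mono (L ++ s).
Proof.
elim: fuel s => [|f IH] s /=.
  by case: ifP => // H _ L HL; exact: monoPP HL H.
case: ifP => [H _ L HL|_]; first exact: monoPP HL H.
case: ifP => // H1 H2 L; case/lastP: L => [|L x] //; rewrite size_rcons => -[HL].
rewrite cat_rcons; case: x; [exact: IH H1 _ HL | exact: IH H2 _ HL].
Qed.

Lemma ext20 : ext 20 [::].
Proof. by vm_compute. Qed.

Lemma trs_ok : all (fun t : nat * nat * nat => let: (i, j, k) := t in
  [&& i < 20, j < 20, k < 20, adjn i j, adjn j k & adjn i k]) trs.
Proof. by vm_compute. Qed.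

Lemma three_le (s : seq nat) a b c : uniq [:: a; b; c] -> a \in s -> b \in s -> c \in s ->
  3 <= size (undup s).
Proof.
move=> U Ha Hb Hc.
have -> : 3 = size [:: a; b; c] by [].
apply: uniq_leq_size => // x; rewrite !inE mem_undup => /or3P[] /eqP->//.
Qed.

Lemma inc (c : 'I_20 -> nat) x : c x \in [seq c y | y : 'I_20].
Proof. by apply: map_f; rewrite mem_enum. Qed.

Lemma lower (c : 'I_20 -> nat) : K3_WORM E c -> 3 <= num_colors c.
Proof.
move=> W; rewrite leqNgt; apply/negP => Hlt.
set a := c ord0.
set bf := fun i : nat => c (inord i) == a.
have := extP ext20 (L := map bf (iota 0 20)).
rewrite size_map size_iota cats0 => /(_ erefl) /hasP[[[i j] k] Ht].
have := allP trs_ok _ Ht => /and3P[Hi Hj /and4P[Hk Hij Hjk Hik]].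
rewrite !(nth_map 0) ?size_iota // !nth_iota // !add0n => /andP[/eqP Eij /eqP Ejk].
have Tr : triangle E (inord i) (inord j) (inord k).
  by rewrite /triangle /E !inordK.
have Hs := W _ _ _ Tr; move: Hs.
move: Eij Ejk; rewrite /bf.
case: (eqVneq (c (inord i)) a) => Hia; case: (eqVneq (c (inord j)) a) => Hja //;
 case: (eqVneq (c (inord k)) a) => Hka // _ _.
  by rewrite Hia Hja Hka /= !inE eqxx.
have Hu : forall x y : 'I_20, c x != a -> c y != a -> c x = c y.
  move=> x y Hx Hy; apply/eqP; apply/negPn/negP => Hxy.
  have := @three_le [seq c y | y : 'I_20] a (c x) (c y).
  rewrite /= !inE negb_or Hxy eq_sym Hx eq_sym Hy /= => /(_ isT (inc c ord0) (inc c x) (inc c y)).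
  by rewrite leqNgt Hlt.
by rewrite (Hu _ _ Hja Hia) (Hu _ _ Hka Hia) /= !inE eqxx.
Qed.

Definition I20 := iota 0 20.
Lemma inI (x : 'I_20) : nat_of_ord x \in I20.
Proof. by rewrite mem_iota ltn_ord. Qed.

Lemma symN : all (fun i => all (fun j => adjn i j == adjn j i) I20) I20.
Proof. by vm_compute. Qed.
Lemma irrN : all (fun i => ~~ adjn i i) I20.
Proof. by vm_compute. Qed.
Lemma k4N : all (fun x => all (fun y => all (fun z => all (fun w =>
  ~~ [&& adjn x y, adjn x z, adjn x w, adjn y z, adjn y w & adjn z w]) I20) I20) I20) I20.
Proof. by vm_compute. Qed.
Lemma wormN : all (fun x => all (fun y => all (fun z =>
  [&& adjn x y, adjn y z & adjn x z] ==>
  (size (undup [:: nth 0 cols x; nth 0 cols y; nth 0 cols z]) == 2)) I20) I20) I20.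
Proof. by vm_compute. Qed.

Lemma ncol : num_colors col = 3.
Proof.
rewrite /num_colors (_ : [seq col x | x : 'I_20] = map (nth 0 cols) I20).
  by vm_compute.
by rewrite /I20 -val_enum_ord -map_comp.
Qed.

Lemma wormcol : K3_WORM E col.
Proof.
move=> x y z [H1 [H2 H3]].
move/allP: wormN => /(_ _ (inI x)) /allP /(_ _ (inI y)) /allP /(_ _ (inI z)).
by move: H1 H2 H3; rewrite /E => -> -> -> /eqP.
Qed.

Theorem mainTheorem5 :
  exists (T : finType) (e : rel T),
    [/\ simple_graph e, K4_free e, K3_WORM_colorable e & W_minus_K3_eq e 3].
Proof.
exists 'I_20, E; split.
- split.
  + by move=> x y; move/allP: symN => /(_ _ (inI x)) /allP /(_ _ (inI y)) /eqP.
  + by move=> x; move/allP: irrN => /(_ _ (inI x)) /negbTE.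
- move=> [x [y [z [w H]]]].
  move/allP: k4N => /(_ _ (inI x)) /allP /(_ _ (inI y)) /allP /(_ _ (inI z)) /allP /(_ _ (inI w)).
  by move: H; rewrite /E => ->.
- by exists col; exact: wormcol.
- split; first by exists col; split; [exact: wormcol | exact: ncol].
  exact: lower.
Qed.
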